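(* Let $(\mathbb{X},d_{\mathbb{X}})$ and $(\Xi,d_\Xi)$ be metric spaces, and let $P$, $P^\nu$ ($\nu\in\mathbb{N}$) be probability measures on $(\Xi,\mathcal{B}(\Xi))$ with $P^\nu$ converging weakly to $P$. Let $f,f^\nu:\Xi\times\mathbb{X}\to\overline{\mathbb{R}}$ satisfy, for each $x\in\mathbb{X}$: (a) $f(\cdot,x)$ and $f^\nu(\cdot,x)$, $\nu\in\mathbb{N}$, are measurable; (b) $\displaystyle\liminf_{K\to+\infty}\ \liminf_{(\nu,y)\to(+\infty,x)}\mathbb{E}^{P^\nu}\big[f^\nu(\xi,y)\,\mathbb{1}\{\xi:f^\nu(\xi,y)\le -K\}\big]=0$; (c) for $P$-a.e. $\xi\in\Xi$, $\displaystyle\liminf_{(\nu,y,\zeta)\to(+\infty,x,\xi)}f^\nu(\zeta,y)\ge f(\xi,x)$. Suppose moreover that for each $x\in\mathbb{X}$ either $E^P[f](x)=+\infty$ or there exists a sequence $\{x^\nu\}_{\nu\in\mathbb{N}}\subset\mathbb{X}$ converging to $x$ such that (i) $\displaystyle\limsup_{K\to+\infty}\ \limsup_{\nu\to+\infty}\mathbb{E}^{P^\nu}\big[f^\nu(\xi,x^\nu)\,\mathbb{1}\{\xi:f^\nu(\xi,x^\nu)\ge K\}\big]=0$; (ii) for $P$-a.e. $\xi\in\Xi$, $\displaystyle\limsup_{(\nu,\zeta)\to(+\infty,\xi)}f^\nu(\zeta,x^\nu)\le f(\xi,x)$. Then the functions $E^{P^\nu}[f^\nu]$ epi-converge to $E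^{P}[f]$.
   Context: $\overline{\mathbb{R}}=\mathbb{R}\cup\{-\infty,+\infty\}$; weak convergence means $\int\varphi\,dP^\nu\to\int\varphi\,dP$ for all bounded continuous $\varphi$. For a probability $\mu$ and measurable $\overline{\mathbb{R}}$-valued $g$, $\mathbb{E}^\mu[g]:=\int g_+\,d\mu-\int g_-\,d\mu$ with conventions $+\infty-\alpha=+\infty$ for all $\alpha\in\overline{\mathbb{R}}$ and $\beta-(+\infty)=-\infty$ for $\beta\in\mathbb{R}$; $E^{Q}[h](x):=\mathbb{E}^{Q}[h(\xi,x)]$. $\mathbb{1}\{B\}$ is the indicator. Lower/upper limits: $\liminf_{(\nu,y)\to(+\infty,x)}a^\nu(y):=\lim_{\delta\downarrow0}\lim_{N\to\infty}\inf\{a^\nu(y):\nu\ge N, d_{\mathbb{X}}(y,x)<\delta\}$; $\liminf_{(\nu,y,\zeta)\to(+\infty,x,\xi)}f^\nu(\zeta,y)$ is defined analogously with $d_{\mathbb{X}}(y,x)<\delta$ and $d_\Xi(\zeta,\xi)<\delta$; $\limsup_{(\nu,\zeta)\to(+\infty,\xi)}a^\nu(\zeta):=\lim_{\delta\downarrow0}\lim_{N\to\infty}\sup\{a^\nu(\zeta):\nu\ge N, d_\Xi(\zeta,\xi)<\delta\}$. Functions $h^\nu:\mathbb{X}\to\overline{\mathbb{R}}$ epi-converge to $h$ if for every $x$: for every $x^\nu\to x$, $h(x)\le\liminf_\nu h^\nu(x^\nu)$, and there exists $x^\nu\to x$ with $h^\nu(x^\nu)\to h(x)$. *)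

(* Defs.v *)
From HB Require Import structures.
From mathcomp Require Import all_boot all_order all_algebra.
From mathcomp Require Import all_classical all_reals all_analysis measurable_realfun.
Set Implicit Arguments. Unset Strict Implicit. Unset Printing Implicit Defensive.
Import Order.TTheory GRing.Theory Num.Theory.
Import numFieldNormedType.Exports.
Local Open Scope classical_set_scope.
Local Open Scope ring_scope.

Definition is_metric {R : realType} {T : Type} (d : T -> T -> R) : Prop :=
  [/\ (forall x y, 0 <= d x y), (forall x y, d x y = 0 <-> x = y),
      (forall x y, d x y = d y x) & (forall x y z, d x z <= d x y + d y z)].

Definition dopen {R : realType} {T : Type} (d : T -> T -> R) : set (set T) :=
  fun A => forall x, A x -> exists2 e, 0 < e & forall y, d y x < e -> A y.

Definition borel_type {R : realType} {T : pointedType} (d : T -> T -> R) :=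
  g_sigma_algebraType (dopen d).

Definition dcontinuous {R : realType} {T : Type} (d : T -> T -> R) (phi : T -> R) :=
  forall x e, 0 < e -> exists2 del, 0 < del & forall y, d y x < del -> `|phi y - phi x| < e.

Definition dconv {R : realType} {T : Type} (d : T -> T -> R) (xs : nat -> T) (x : T) :=
  d (xs n) x @[n --> \oo] --> (0 : R).

Local Open Scope ereal_scope.

Definition weak_conv {R : realType} {T : pointedType} (d : T -> T -> R)
  (Pn : nat -> probability (borel_type d) R) (P : probability (borel_type d) R) :=
  forall phi : T -> R, dcontinuous d phi -> (exists M : R, forall x, (`|phi x| <= M)%R) ->
    (\int[Pn n]_(x in [set: borel_type d]) (phi x)%:E) @[n --> \oo] -->
    \int[P]_(x in [set: borel_type d]) (phi x)%:E.

Definition Eexp {R : realType} {T : pointedType} {d : T -> T -> R}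
  (mu : probability (borel_type d) R) (g : T -> \bar R) : \bar R :=
  let a := \int[mu]_(x in [set: borel_type d]) (g^\+ x) in
  let b := \int[mu]_(x in [set: borel_type d]) (g^\- x) in
  if a == +oo then +oo else a - b.

Definition trunc_le {R : realType} (v : \bar R) (K : R) : \bar R :=
  if v <= (- K)%:E then v else 0.
Definition trunc_ge {R : realType} (v : \bar R) (K : R) : \bar R :=
  if K%:E <= v then v else 0.

(* liminf_{K -> +oo} g K  and  limsup_{K -> +oo} g K  (K real) ;
   lim_{K} inf_{K' >= K} = sup_K inf_{K' >= K} by monotonicity *)
Definition liminf_K {R : realType} (g : R -> \bar R) : \bar R :=
  ereal_sup [set ereal_inf [set g K' | K' in [set K' | (K <= K')%R]] | K in [set: R]].
Definition limsup_K {R : realType} (g : R -> \bar R) : \bar R :=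
  ereal_inf [set ereal_sup [set g K' | K' in [set K' | (K <= K')%R]] | K in [set: R]].

(* liminf_{(nu,y) -> (+oo,x)} a^nu(y)
   = lim_{del↓0} lim_N inf{a^nu(y) : nu >= N, d(y,x) < del}; both limits are
   monotone, hence equal to suprema. *)
Definition liminf_ny {R : realType} {X : Type} (dX : X -> X -> R)
  (a : nat -> X -> \bar R) (x : X) : \bar R :=
  ereal_sup [set e | exists del N, (0 < del)%R /\
    e = ereal_inf [set v | exists n y, [/\ (N <= n)%N, (dX y x < del)%R & v = a n y]]].

Definition liminf_nyz {R : realType} {X Xi : Type} (dX : X -> X -> R)
  (dXi : Xi -> Xi -> R) (fn : nat -> Xi -> X -> \bar R) (x : X) (xi : Xi) : \bar R :=
  ereal_sup [set e | exists del N, (0 < del)%R /\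
    e = ereal_inf [set v | exists n y z,
      [/\ (N <= n)%N, (dX y x < del)%R, (dXi z xi < del)%R & v = fn n z y]]].

Definition limsup_nz {R : realType} {Xi : Type} (dXi : Xi -> Xi -> R)
  (a : nat -> Xi -> \bar R) (xi : Xi) : \bar R :=
  ereal_inf [set e | exists del N, (0 < del)%R /\
    e = ereal_sup [set v | exists n z, [/\ (N <= n)%N, (dXi z xi < del)%R & v = a n z]]].

Definition epi_converges {R : realType} {X : Type} (dX : X -> X -> R)
  (h : nat -> X -> \bar R) (g : X -> \bar R) : Prop :=
  forall x,
    (forall xs : nat -> X, dconv dX xs x -> g x <= limn_einf (fun n => h n (xs n))) /\
    (exists2 xs : nat -> X, dconv dX xs x & h n (xs n) @[n --> \oo] --> g x).

(* Main.v *)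
Require Import Defs.
From HB Require Import structures.
From mathcomp Require Import all_boot all_order all_algebra.
From mathcomp Require Import all_classical all_reals all_analysis measurable_realfun.
From mathcomp Require Import ring lra.
Set Implicit Arguments. Unset Strict Implicit. Unset Printing Implicit Defensive.
Import Order.TTheory GRing.Theory Num.Theory.
Import numFieldNormedType.Exports.
Local Open Scope classical_set_scope.
Local Open Scope ring_scope.
Local Open Scope ereal_scope.

Section A.
Context {R : realType}.

Lemma ereal_dense (x l : \bar R) : x < l -> exists t : R, x < t%:E < l.
Proof.
case: x => [s| |]; case: l => [r| |] //=.
- by rewrite lte_fin => sr; exists ((s + r) / 2)%R; rewrite !lte_fin; apply/andP; split; lra.
- by move=> _; exists (s + 1)%R; rewrite !lte_fin ltry andbT; lra.
- by move=> _; exists (r - 1)%R; rewrite lte_fin ltNyr /=; lra.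
- by move=> _; exists 0%R; rewrite ltNyr ltry.
Qed.

Lemma le_by_reals (l x : \bar R) : (forall t : R, t%:E < l -> t%:E <= x) -> l <= x.
Proof.
move=> H; rewrite leNgt; apply/negP => /ereal_dense [t /andP[xt tl]].
by have := H t tl; rewrite leNgt xt.
Qed.

Lemma liminf_ge (u : (\bar R)^nat) (l : \bar R) :
  (forall t : R, t%:E < l -> \forall n \near \oo, t%:E <= u n) -> l <= limn_einf u.
Proof.
move=> H; apply: le_by_reals => t tl.
have [N _ HN] := H t tl.
rewrite limn_einf_lim.
have cv := ereal_nondecreasing_cvgn (nondecreasing_einfs u).
rewrite (cvg_lim _ cv) //.
apply: (@le_trans _ _ (einfs u N)); last by apply: ereal_sup_ubound; exists N.
apply/ereal_infP => _ [k /= Nk <-]; exact: HN.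
Qed.

Lemma cvg_by_bounds (u : (\bar R)^nat) (l : \bar R) :
  (forall t : R, t%:E < l -> \forall n \near \oo, t%:E <= u n) ->
  (forall t : R, l < t%:E -> \forall n \near \oo, u n <= t%:E) ->
  u @ \oo --> l.
Proof.
case: l => [r| |] Hlo Hup.
- apply/fine_cvgP; split.
    have h1 := Hlo (r - 1)%R; have h2 := Hup (r + 1)%R.
    rewrite lte_fin in h1; rewrite lte_fin in h2.
    have {h1}h1 := h1 ltac:(lra); have {h2}h2 := h2 ltac:(lra).
    apply: filterS2 h1 h2 => n a1 a2.
    by rewrite fin_numElt (lt_le_trans _ a1) ?ltNyr // (le_lt_trans a2) ?ltry.
  apply/cvgrPdist_le => e e0.
  have h1 := Hlo (r - e)%R; have h2 := Hup (r + e)%R.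
  rewrite lte_fin in h1; rewrite lte_fin in h2.
  have {h1}h1 := h1 ltac:(lra); have {h2}h2 := h2 ltac:(lra).
  apply: filterS2 h1 h2 => n; case E: (u n) => [s| |] //= a1 a2.
  rewrite !lee_fin in a1 a2. rewrite /= E /= distrC ler_norml; apply/andP; split; lra.
- apply/cvgeyPge => A; exact: Hlo (ltry A).
- apply/cvgeNyPle => A; exact: Hup (ltNyr A).
Qed.
End A.

Section B.
Context {R : realType}.

Definition clampR (a b : R) (v : \bar R) : R :=
  match v with
  | r%:E => if (r <= a)%R then a else if (b <= r)%R then b else r
  | +oo => b
  | -oo => a
  end.

Lemma clampR_bnd a b v : (a <= b)%R -> (a <= clampR a b v <= b)%R.
Proof.
move=> ab; case: v => [r| |] /=; last by rewrite lexx ab.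
  case: ifP => ra; first by rewrite lexx ab.
  case: ifP => br; first by rewrite lexx ab.
  by move/negbT: ra; move/negbT: br; rewrite -!ltNge => br ar; apply/andP; split; apply/ltW.
by rewrite lexx ab.
Qed.

Lemma clampRE a b v : (a <= b)%R -> (clampR a b v)%:E = mine b%:E (maxe a%:E v).
Proof.
move=> ab; case: v => [r| |] /=.
- case: ifP => ra.
    have -> : maxe a%:E r%:E = a%:E by apply/max_idPl; rewrite lee_fin.
    by apply/esym/min_idPr; rewrite lee_fin.
  move/negbT: ra; rewrite -ltNge => ar.
  have -> : maxe a%:E r%:E = r%:E by apply/max_idPr; rewrite lee_fin ltW.
  case: ifP => br.
    by apply/esym/min_idPl; rewrite lee_fin.
  move/negbT: br; rewrite -ltNge => rb.
  by apply/esym/min_idPr; rewrite lee_fin ltW.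
- have -> : maxe a%:E +oo = +oo by apply/max_idPr; rewrite leey.
  by apply/esym/min_idPl; rewrite leey.
- have -> : maxe a%:E -oo = a%:E by apply/max_idPl; rewrite leNye.
  by apply/esym/min_idPr; rewrite lee_fin.
Qed.

Lemma measurable_clampR d (T : measurableType d) a b (g : T -> \bar R) :
  (a <= b)%R -> measurable_fun setT g -> measurable_fun setT (fun x => clampR a b (g x)).
Proof.
move=> ab mg.
rewrite (_ : (fun x => clampR a b (g x)) = fine \o (fun x => mine b%:E (maxe a%:E (g x)))).
  apply: measurableT_comp => //; apply: measurable_mine => //.
  exact: measurable_maxe.
by apply/funext => x /=; rewrite -clampRE.
Qed.

End B.

Section B2.
Context d (T : measurableType d) (R : realType) (mu : probability T R).

Lemma bounded_of (h : T -> R) (c : R) : (forall x, `|h x| <= c)%R ->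
  [bounded h x | x in setT].
Proof.
move=> H; rewrite /bounded_near; near=> M; move=> x _ /=; apply: (le_trans (H x)).
near: M; apply: nbhs_pinfty_ge; exact: num_real.
Unshelve. all: by end_near.
Qed.

Lemma int_bounded (h : T -> R) (a b : R) : measurable_fun setT h ->
  (forall x, a <= h x <= b)%R -> mu.-integrable setT (EFin \o h).
Proof.
move=> mh hb; apply: measurable_bounded_integrable => //.
  by apply: (@le_lt_trans _ _ 1); [exact: probability_le1 | exact: ltry].
rewrite /bounded_near; near=> M; move=> x _ /=.
apply: (@le_trans _ _ (`|a| + `|b|)%R); last by near: M; apply: nbhs_pinfty_ge; exact: num_real.
have := hb x; move=> /andP[h1 h2].
have := ler_norm a; have := ler_norm (- a); have := ler_norm b; have := ler_norm (- b).
rewrite !normrN => n1 n2 n3 n4.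
rewrite ler_norml; apply/andP; split; lra.
Unshelve. all: by end_near.
Qed.

Lemma muT : mu [set: T] = 1.
Proof. exact: probability_setT. Qed.

Lemma int_cst (c : R) : \int[mu]_(x in setT) c%:E = c%:E.
Proof. rewrite (integral_cst mu measurableT c%:E); set m := (X in _ * X); have -> : m = 1 by exact: probability_setT. by rewrite mule1. Qed.

Lemma int_subc (h : T -> R) (a b c : R) : measurable_fun setT h ->
  (forall x, a <= h x <= b)%R ->
  \int[mu]_(x in setT) (h x - c)%:E = \int[mu]_(x in setT) (h x)%:E - c%:E.
Proof.
move=> mh hb.
have ih := int_bounded mh hb.
have ic : mu.-integrable setT (EFin \o (fun=> c)).
  by apply: (@int_bounded _ c c) => // x; rewrite lexx.
rewrite (_ : (fun x => (h x - c)%:E) = (fun x => (h x)%:E - (c)%:E)) //.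
by rewrite (integralB_EFin measurableT ih ic) int_cst.
Qed.

Lemma int_csub (h : T -> R) (a b c : R) : measurable_fun setT h ->
  (forall x, a <= h x <= b)%R ->
  \int[mu]_(x in setT) (c - h x)%:E = c%:E - \int[mu]_(x in setT) (h x)%:E.
Proof.
move=> mh hb.
have ih := int_bounded mh hb.
have ic : mu.-integrable setT (EFin \o (fun=> c)).
  by apply: (@int_bounded _ c c) => // x; rewrite lexx.
rewrite (_ : (fun x => (c - h x)%:E) = (fun x => (c)%:E - (h x)%:E)) //.
by rewrite (integralB_EFin measurableT ic ih) int_cst.
Qed.

End B2.

Section P.
Context {R : realType}.

Lemma clamp_trunc_le (K M : R) (v : \bar R) : (0 <= K)%R -> (0 <= M)%R ->
  (clampR (- K) M v)%:E + trunc_le v K <= v.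
Proof.
move=> K0 M0; rewrite /trunc_le; case: v => [r| |] /=.
- rewrite lee_fin; case: (leP r (- K)%R) => rK; case: (leP M r) => Mr;
    rewrite -?EFinD lee_fin; lra.
- by rewrite leey.
- by rewrite leNye addeNy.
Qed.

Lemma clamp_trunc_ge (K M : R) (v : \bar R) : (0 <= K)%R -> (0 <= M)%R ->
  v <= (clampR (- M) K v)%:E + trunc_ge v K.
Proof.
move=> K0 M0; rewrite /trunc_ge; case: v => [r| |] /=.
- rewrite lee_fin; case: (leP r (- M)%R) => rK; case: (leP K r) => Mr;
    rewrite -?EFinD lee_fin; lra.
- by rewrite leey addey.
- by rewrite leNye.
Qed.

Lemma trunc_le_le0 (K : R) v : (0 <= K)%R -> trunc_le v K <= 0.
Proof.
move=> K0; rewrite /trunc_le; case: ifP => // h.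
by apply: (le_trans h); rewrite lee_fin oppr_le0.
Qed.

Lemma trunc_ge_ge0 (K : R) v : (0 <= K)%R -> 0 <= trunc_ge v K.
Proof. by move=> K0; rewrite /trunc_ge; case: ifP => // h; apply: le_trans h; rewrite lee_fin. Qed.

End P.

Section C.
Context {R : realType} {Xi : pointedType} {dXi : Xi -> Xi -> R}.
Context (mu : probability (borel_type dXi) R).
Local Notation T := (borel_type dXi).

Lemma EexpE (g : T -> \bar R) :
  \int[mu]_(x in [set: T]) g^\+ x != +oo -> Eexp mu g = \int[mu]_(x in [set: T]) g x.
Proof. by move=> h; rewrite /Eexp /= (negbTE h) [RHS]integralE. Qed.

Lemma Eexp_ge (h g : T -> \bar R) : mu.-integrable setT h ->
  measurable_fun setT g -> (forall x, h x <= g x) ->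
  \int[mu]_(x in [set: T]) h x <= Eexp mu g.
Proof.
move=> ih mg hg; rewrite /Eexp /=; case: ifP => _; first exact: leey.
rewrite integralE leeB//.
- apply: ge0_le_integral => //.
  + by move/integrableP : ih => [+ _]; exact: measurable_funepos.
  + exact: measurable_funepos.
  + by move=> x _; apply: (@funepos_le _ _ setT); [move=> y _; exact: hg | exact: in_setT].
- apply: ge0_le_integral => //.
  + exact: measurable_funeneg.
  + by move/integrableP : ih => [+ _]; exact: measurable_funeneg.
  + by move=> x _; apply: (@funeneg_le _ _ setT); [move=> y _; exact: hg | exact: in_setT].
Qed.

Lemma Eexp_le (h g : T -> \bar R) : mu.-integrable setT h ->
  measurable_fun setT g -> (forall x, g x <= h x) ->
  Eexp mu g <= \int[mu]_(x in [set: T]) h x.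
Proof.
move=> ih mg hg.
have hp : \int[mu]_(x in [set: T]) g^\+ x <= \int[mu]_(x in [set: T]) h^\+ x.
  apply: ge0_le_integral => //.
  + exact: measurable_funepos.
  + by move/integrableP : ih => [+ _]; exact: measurable_funepos.
  + by move=> x _; apply: (@funepos_le _ _ setT); [move=> y _; exact: hg | exact: in_setT].
have hfin : \int[mu]_(x in [set: T]) h^\+ x != +oo.
  have := integrable_fin_num measurableT ih; rewrite integralE.
  rewrite fin_numB => /andP[+ _]; rewrite fin_numE => /andP[_ //].
rewrite EexpE; last by rewrite -ltey (le_lt_trans hp) // ltey.
rewrite integralE [leRHS]integralE leeB//.
- apply: ge0_le_integral => //.
  + by move/integrableP : ih => [+ _]; exact: measurable_funeneg.
  + exact: measurable_funeneg.
  + by move=> x _; apply: (@funeneg_le _ _ setT); [move=> y _; exact: hg | exact: in_setT].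
Qed.

End C.

Section T.
Context {R : realType}.
Lemma clamp_pos (A B : R) v : (0 <= A)%R -> (0 <= B)%R ->
  maxe (clampR (- A) B v)%:E 0 = mine B%:E (maxe v 0).
Proof.
move=> A0 B0; case: v => [r| |] /=.
- rewrite -!EFin_max -EFin_min; congr EFin.
  case: (leP r (- A)%R) => h1; case: (leP B r) => h2;
  repeat (case: leP => ?); lra.
- rewrite (_ : maxe +oo 0 = +oo); last by apply/max_idPl; rewrite leey.
  rewrite (_ : mine B%:E +oo = B%:E); last by apply/min_idPl; rewrite leey.
  rewrite -EFin_max; congr EFin; case: leP => ?; lra.
- rewrite (_ : maxe -oo 0 = 0); last by apply/max_idPr; rewrite leNye.
  rewrite -EFin_max -EFin_min; congr EFin; repeat (case: leP => ?); lra.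
Qed.
Lemma clamp_neg (A B : R) v : (0 <= A)%R -> (0 <= B)%R ->
  maxe (- (clampR (- A) B v)%:E) 0 = mine A%:E (maxe (- v) 0).
Proof.
move=> A0 B0; case: v => [r| |] /=.
- rewrite -!EFin_max -EFin_min; congr EFin.
  case: (leP r (- A)%R) => h1; case: (leP B r) => h2;
  repeat (case: leP => ?); lra.
- rewrite (_ : maxe -oo 0 = 0); last by apply/max_idPr; rewrite leNye.
  rewrite -EFin_max -EFin_min; congr EFin; repeat (case: leP => ?); lra.
- rewrite (_ : maxe +oo 0 = +oo); last by apply/max_idPl; rewrite leey.
  rewrite (_ : mine A%:E +oo = A%:E); last by apply/min_idPl; rewrite leey.
  rewrite -EFin_max; congr EFin; case: leP => ?; lra.
Qed.
End T.

Section C2.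
Context {R : realType} {Xi : pointedType} {dXi : Xi -> Xi -> R}.
Context (mu : probability (borel_type dXi) R).
Local Notation T := (borel_type dXi).

Lemma E1 (g : T -> \bar R) (K M : R) : (0 <= K)%R -> (0 <= M)%R ->
  measurable_fun setT g ->
  \int[mu]_(x in [set: T]) (clampR (- K) M (g x))%:E +
    Eexp mu (fun x => trunc_le (g x) K) <= Eexp mu g.
Proof.
move=> K0 M0 mg.
set b := fun x => trunc_le (g x) K.
have mb : measurable_fun setT b.
  rewrite /b /trunc_le; apply: measurable_fun_ifT => //.
  exact: measurable_fun_lee.
have b0 x : b x <= 0 by exact: trunc_le_le0.
have bp : \int[mu]_(x in [set: T]) b^\+ x = 0.
  rewrite (eq_integral (cst 0)) ?integral0 // => x _.
  by rewrite funeposE /=; apply/max_idPr; exact: b0.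
have KM : (- K <= M)%R by lra.
have mc : measurable_fun setT (fun x => clampR (- K) M (g x)) := measurable_clampR KM mg.
have cb x : (- K <= clampR (- K) M (g x) <= M)%R := clampR_bnd _ KM.
have ic := int_bounded mu mc cb.
have Eb : Eexp mu b = \int[mu]_(x in [set: T]) b x by apply: EexpE; rewrite bp.
have [binf|bfin] := eqVneq (\int[mu]_(x in [set: T]) b^\- x) +oo.
  rewrite Eb [X in _ + X <= _]integralE bp binf sub0e.
  by rewrite (_ : - +oo = -oo) // addeNy leNye.
have ib : mu.-integrable setT b.
  apply/integrableP; split => //.
  rewrite (eq_integral (fun x => b^\- x)); first by rewrite ltey.
  move=> x _; rewrite funenegE /= lee0_abs ?b0//.
  by apply/esym/max_idPl; rewrite oppe_ge0 b0.
rewrite Eb -(integralD measurableT ic ib).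
apply: Eexp_ge => //; first exact: integrableD.
move=> x; exact: clamp_trunc_le.
Qed.

Lemma E1' (g : T -> \bar R) (K M : R) : (0 <= K)%R -> (0 <= M)%R ->
  measurable_fun setT g ->
  Eexp mu g <= \int[mu]_(x in [set: T]) (clampR (- M) K (g x))%:E +
    Eexp mu (fun x => trunc_ge (g x) K).
Proof.
move=> K0 M0 mg.
set b := fun x => trunc_ge (g x) K.
have mb : measurable_fun setT b.
  rewrite /b /trunc_ge; apply: measurable_fun_ifT => //.
  exact: measurable_fun_lee.
have b0 x : 0 <= b x by exact: trunc_ge_ge0.
have bn : \int[mu]_(x in [set: T]) b^\- x = 0.
  rewrite (eq_integral (cst 0)) ?integral0 // => x _.
  by rewrite funenegE /=; apply/max_idPr; rewrite oppe_le0 b0.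
have KM : (- M <= K)%R by lra.
have mc : measurable_fun setT (fun x => clampR (- M) K (g x)) := measurable_clampR KM mg.
have cb x : (- M <= clampR (- M) K (g x) <= K)%R := clampR_bnd _ KM.
have ic := int_bounded mu mc cb.
have cfin := integrable_fin_num measurableT ic.
have [binf|bfin] := eqVneq (\int[mu]_(x in [set: T]) b^\+ x) +oo.
  rewrite {2}/Eexp /= binf eqxx addey ?leey //.
  by move: cfin; rewrite fin_numE => /andP[].
have Eb : Eexp mu b = \int[mu]_(x in [set: T]) b x by apply: EexpE.
have ib : mu.-integrable setT b.
  apply/integrableP; split => //.
  rewrite (eq_integral (fun x => b^\+ x)); first by rewrite ltey.
  move=> x _; rewrite funeposE /= gee0_abs ?b0//.
  by apply/esym/max_idPl; rewrite b0.
rewrite Eb -(integralD measurableT ic ib).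
apply: Eexp_le => //; first exact: integrableD.
move=> x; exact: clamp_trunc_ge.
Qed.

Lemma int_min_bnd (w : T -> \bar R) (c : R) : (0 <= c)%R -> measurable_fun setT w ->
  (forall x, 0 <= w x) ->
  0 <= \int[mu]_(x in [set: T]) mine c%:E (w x) <= c%:E.
Proof.
move=> c0 mw w0; apply/andP; split.
  by apply: integral_ge0 => x _; rewrite le_min lee_fin c0 w0.
rewrite -[leRHS](int_cst mu); apply: ge0_le_integral => //.
- by move=> x _; rewrite le_min lee_fin c0 w0.
- by apply: measurable_mine.
- by move=> x _; rewrite ge_min lexx.
Qed.

Lemma int_min_approx (w : T -> \bar R) (a : R) : measurable_fun setT w ->
  (forall x, 0 <= w x) -> a%:E < \int[mu]_(x in [set: T]) w x ->
  exists M : R, (0 <= M)%R /\ a%:E < \int[mu]_(x in [set: T]) mine M%:E (w x).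
Proof.
move=> mw w0 aw.
pose gs := fun (n : nat) x => mine (n%:R)%:E (w x).
have mgs n : measurable_fun setT (gs n) by apply: measurable_mine.
have gs0 n x : setT x -> 0 <= gs n x by move=> _; rewrite le_min lee_fin ler0n w0.
have nd x : setT x -> nondecreasing_seq (gs ^~ x).
  move=> _ m n mn; rewrite /gs; apply: le_min2 => //; by rewrite lee_fin ler_nat.
have lim y : limn (gs ^~ y) = w y.
  apply: cvg_lim => //; apply: cvg_by_bounds => t.
    move=> tw; near=> n; rewrite /gs le_min (ltW tw) andbT lee_fin.
    by apply: ltW; near: n; exact: nbhs_infty_gtr.
  by move=> wt; near=> n; rewrite /gs ge_min (ltW wt) orbT.
have := @monotone_convergence _ _ _ mu setT measurableT gs mgs gs0 nd.
rewrite (eq_integral w); last by move=> x _; rewrite lim.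
move=> eq; move: aw; rewrite eq.
have ndI : nondecreasing_seq (fun n => \int[mu]_(x in [set: T]) gs n x).
  move=> m n mn; apply: ge0_le_integral => //.
  - by move=> x; exact: gs0.
  - by move=> x _; exact: (nd x I m n mn).
rewrite (cvg_lim _ (ereal_nondecreasing_cvgn ndI)) //.
move=> /ereal_sup_gtP [_ [n _ <-] an].
by exists n%:R; split => //; rewrite ler0n.
Unshelve. all: by end_near.
Qed.

End C2.

Section C3.
Context {R : realType} {Xi : pointedType} {dXi : Xi -> Xi -> R}.
Context (mu : probability (borel_type dXi) R).
Local Notation T := (borel_type dXi).

Lemma int_min_le (w : T -> \bar R) (c : R) : (0 <= c)%R -> measurable_fun setT w ->
  (forall x, 0 <= w x) ->
  \int[mu]_(x in [set: T]) mine c%:E (w x) <= \int[mu]_(x in [set: T]) w x.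
Proof.
move=> c0 mw w0; apply: ge0_le_integral => //.
- by move=> x _; rewrite le_min lee_fin c0 w0.
- by apply: measurable_mine.
- by move=> x _; rewrite ge_min lexx orbT.
Qed.

Lemma E2 (g : T -> \bar R) (K t : R) : (0 <= K)%R -> measurable_fun setT g ->
  t%:E < Eexp mu g ->
  exists M : R, (0 <= M)%R /\ t%:E < \int[mu]_(x in [set: T]) (clampR (- K) M (g x))%:E.
Proof.
move=> K0 mg tE.
have mgp := measurable_funepos mg; have mgn := measurable_funeneg mg.
set A := \int[mu]_(x in [set: T]) mine K%:E (g^\- x).
have /andP[A0 AK] := int_min_bnd mu K0 mgn (funeneg_ge0 g).
have Afin : A \is a fin_num by rewrite ge0_fin_numE // (le_lt_trans AK) ?ltry.
have key : (t + fine A)%:E < \int[mu]_(x in [set: T]) g^\+ x.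
  have [->|hp] := eqVneq (\int[mu]_(x in [set: T]) g^\+ x) +oo; first exact: ltry.
  move: tE; rewrite /Eexp /= (negbTE hp).
  have AN : A <= \int[mu]_(x in [set: T]) g^\- x := int_min_le K0 mgn (funeneg_ge0 g).
  have Pfin : \int[mu]_(x in [set: T]) g^\+ x \is a fin_num.
    by rewrite ge0_fin_numE ?ltey // integral_ge0 // => x _; exact: funepos_ge0.
  have [->|hn] := eqVneq (\int[mu]_(x in [set: T]) g^\- x) +oo.
    by rewrite (_ : - +oo = -oo) // addeNy ltNge leNye.
  have Nfin : \int[mu]_(x in [set: T]) g^\- x \is a fin_num.
    by rewrite ge0_fin_numE ?ltey // integral_ge0 // => x _; exact: funeneg_ge0.
  move: AN; rewrite -(fineK Pfin) -(fineK Nfin) -(fineK Afin).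
  rewrite -EFinB !lte_fin lee_fin /= => h1 h2; lra.
have [M [M0 HM]] := int_min_approx (mu:=mu) mgp (funepos_ge0 g) key.
exists M; split => //.
rewrite integralE.
rewrite [X in X - _](eq_integral (fun x => mine M%:E (g^\+ x))); last first.
  by move=> x _; rewrite !funeposE clamp_pos.
rewrite [X in _ - X](eq_integral (fun x => mine K%:E (g^\- x))); last first.
  by move=> x _; rewrite !funenegE clamp_neg.
have /andP[I0 IM] := int_min_bnd mu M0 mgp (funepos_ge0 g).
have Ifin : \int[mu]_(x in [set: T]) mine M%:E (g^\+ x) \is a fin_num.
  by rewrite ge0_fin_numE // (le_lt_trans IM) ?ltry.
move: HM; rewrite -/A -(fineK Afin) -(fineK Ifin) -EFinB !lte_fin /= => h; lra.
Qed.

Lemma E2' (g : T -> \bar R) (K t : R) : (0 <= K)%R -> measurable_fun setT g ->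
  Eexp mu g < t%:E ->
  exists M : R, (0 <= M)%R /\ \int[mu]_(x in [set: T]) (clampR (- M) K (g x))%:E < t%:E.
Proof.
move=> K0 mg tE.
have mgp := measurable_funepos mg; have mgn := measurable_funeneg mg.
have hp : \int[mu]_(x in [set: T]) g^\+ x != +oo.
  by apply/negP => /eqP hp; move: tE; rewrite /Eexp /= hp eqxx ltNge leey.
move: tE; rewrite /Eexp /= (negbTE hp) => tE.
set B := \int[mu]_(x in [set: T]) mine K%:E (g^\+ x).
have /andP[B0 BK] := int_min_bnd mu K0 mgp (funepos_ge0 g).
have Bfin : B \is a fin_num by rewrite ge0_fin_numE // (le_lt_trans BK) ?ltry.
have BP : B <= \int[mu]_(x in [set: T]) g^\+ x := int_min_le K0 mgp (funepos_ge0 g).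
have Pfin : \int[mu]_(x in [set: T]) g^\+ x \is a fin_num.
  by rewrite ge0_fin_numE ?ltey // integral_ge0 // => x _; exact: funepos_ge0.
have key : (fine B - t)%:E < \int[mu]_(x in [set: T]) g^\- x.
  have [->|hn] := eqVneq (\int[mu]_(x in [set: T]) g^\- x) +oo; first exact: ltry.
  have Nfin : \int[mu]_(x in [set: T]) g^\- x \is a fin_num.
    by rewrite ge0_fin_numE ?ltey // integral_ge0 // => x _; exact: funeneg_ge0.
  move: BP tE; rewrite -(fineK Pfin) -(fineK Nfin) -(fineK Bfin).
  rewrite -EFinB !lte_fin lee_fin /= => h1 h2; lra.
have [M [M0 HM]] := int_min_approx (mu:=mu) mgn (funeneg_ge0 g) key.
exists M; split => //.
rewrite integralE.
rewrite [X in X - _](eq_integral (fun x => mine K%:E (g^\+ x))); last first.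
  by move=> x _; rewrite !funeposE clamp_pos.
rewrite [X in _ - X](eq_integral (fun x => mine M%:E (g^\- x))); last first.
  by move=> x _; rewrite !funenegE clamp_neg.
have /andP[I0 IM] := int_min_bnd mu M0 mgn (funeneg_ge0 g).
have Ifin : \int[mu]_(x in [set: T]) mine M%:E (g^\- x) \is a fin_num.
  by rewrite ge0_fin_numE // (le_lt_trans IM) ?ltry.
move: HM; rewrite -/B -(fineK Bfin) -(fineK Ifin) -EFinB !lte_fin /= => h; lra.
Qed.

End C3.

Section D.
Context {R : realType} {Xi : pointedType} {dXi : Xi -> Xi -> R}.
Hypothesis hd : is_metric dXi.
Local Notation T := (borel_type dXi).

Let d_ge0 x y : (0 <= dXi x y)%R. Proof. by case: hd. Qed.
Let d_xx x : dXi x x = 0%R. Proof. by case: hd => _ h _ _; apply/h. Qed.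
Let d_sym x y : dXi x y = dXi y x. Proof. by case: hd. Qed.
Let d_tri x y z : (dXi x z <= dXi x y + dXi y z)%R. Proof. by case: hd. Qed.

Lemma dcont_meas (phi : Xi -> R) : dcontinuous dXi phi ->
  measurable_fun [set: T] (phi : T -> R).
Proof.
move=> hphi; apply: (measurability _ (RGenOInfty.measurableE R)).
move=> _ [_ [x ->] <-]; apply: sub_sigma_algebra => y [_ /=].
rewrite in_itv /= andbT => xy.
have [del del0 hdel] := hphi y (phi y - x)%R ltac:(by rewrite subr_gt0).
exists del => // z zy; split => //=; rewrite in_itv /= andbT.
have := hdel z zy; rewrite ltr_norml => /andP[h1 h2]; lra.
Qed.

Lemma lip_dcont (phi : Xi -> R) (m : R) : (0 <= m)%R ->
  (forall x y, phi x <= phi y + m * dXi x y)%R -> dcontinuous dXi phi.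
Proof.
move=> m0 hl x e e0; exists (e / (m + 1))%R.
  by apply: divr_gt0 => //; lra.
move=> y yx.
have h1 := hl y x; have h2 := hl x y.
rewrite (d_sym x y) in h2.
have hm : (m * dXi y x < e)%R.
  have mp : (0 < m + 1)%R by lra.
  have : (dXi y x * (m + 1) < e)%R by move: yx; rewrite ltr_pdivlMr.
  have := d_ge0 y x; nra.
rewrite ltr_norml; apply/andP; split; lra.
Qed.

Section psi.
Variables (us : nat -> Xi -> R) (b : R).
Hypothesis us_bnd : forall n x, (0 <= us n x <= b)%R.

Definition psiS (m : nat) (x : Xi) : set R :=
  [set (us nz.1 nz.2 + m%:R * dXi x nz.2)%R | nz in [set nz : nat * Xi | (m <= nz.1)%N]].

Definition psi (m : nat) (x : Xi) : R := inf (psiS m x).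

Let psiS_ne m x : psiS m x !=set0.
Proof. by exists (us m x + m%:R * dXi x x)%R; exists (m, x) => //=. Qed.

Let psiS_lb m x : lbound (psiS m x) 0%R.
Proof.
move=> _ [[n z] /= mn <-]; have := us_bnd n z => /andP[h _].
by apply: addr_ge0 => //; apply: mulr_ge0.
Qed.

Let psiS_hlb m x : has_lbound (psiS m x).
Proof. by exists 0%R; exact: psiS_lb. Qed.

Lemma psi_le_us m n x : (m <= n)%N -> (psi m x <= us n x)%R.
Proof.
move=> mn; have := @ge_inf _ _ (psiS_hlb m x) (us n x + m%:R * dXi x x)%R.
rewrite d_xx mulr0 addr0; apply; exists (n, x) => //=.
by rewrite d_xx mulr0 addr0.
Qed.

Lemma psi_bnd m x : (0 <= psi m x <= b)%R.
Proof.
apply/andP; split; first by apply: lb_le_inf => //; exact: psiS_lb.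
apply: le_trans (psi_le_us x (leqnn m)) _.
by have /andP[] := us_bnd m x.
Qed.

Lemma psi_lip m x y : (psi m x <= psi m y + m%:R * dXi x y)%R.
Proof.
rewrite -lerBlDr; apply: lb_le_inf => // _ [[n z] /= mn <-].
rewrite lerBlDr.
apply: (@le_trans _ _ (us n z + m%:R * dXi x z)%R).
  by apply: ge_inf => //; exists (n, z).
rewrite -addrA lerD2l -mulrDr; apply: ler_wpM2l => //.
by rewrite addrC; apply: d_tri.
Qed.

Lemma psi_nd x : nondecreasing_seq (psi ^~ x).
Proof.
apply/nondecreasing_seqP => m.
apply: lb_le_inf => // _ [[n z] /= mn <-].
apply: (@le_trans _ _ (us n z + m%:R * dXi x z)%R).
  by apply: ge_inf => //; exists (n, z) => //=; apply: ltnW.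
by rewrite lerD2l; apply: ler_wpM2r => //; rewrite ler_nat.
Qed.

Lemma psi_dcont m : dcontinuous dXi (psi m).
Proof. by apply: (@lip_dcont _ m%:R) => //; exact: psi_lip. Qed.

Lemma psi_big x (r : R) (del : R) (N : nat) : (0 < del)%R ->
  (forall n z, (N <= n)%N -> (dXi z x < del)%R -> (r < us n z)%R) ->
  exists m, (r <= psi m x)%R.
Proof.
move=> del0 H.
have [M _ HM] := nbhs_infty_gtr (r / del)%R.
exists (maxn N M); apply: lb_le_inf => // _ [[n z] /= mn <-].
have Nn : (N <= n)%N by apply: leq_trans mn; rewrite leq_maxl.
have Mn : (M <= n)%N by apply: leq_trans mn; rewrite leq_maxr.
have /andP[u0 _] := us_bnd n z.
have mpos : (0 <= (maxn N M)%:R)%R by [].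
have dpos := d_ge0 x z.
have [zx|zx] := ltP (dXi z x) del.
  have := H n z Nn zx.
  have : (0 <= (maxn N M)%:R * dXi x z)%R by apply: mulr_ge0.
  lra.
have hM : (r / del < (maxn N M)%:R)%R.
  apply: (lt_le_trans (HM M (leqnn M))); rewrite ler_nat; exact: leq_maxr.
rewrite ltr_pdivrMr // in hM.
rewrite d_sym in zx.
have : (del * (maxn N M)%:R <= dXi x z * (maxn N M)%:R)%R by apply: ler_wpM2r.
nra.
Qed.

End psi.
End D.

Lemma cvg_lower {R : realType} (u : (\bar R)^nat) (l : \bar R) (t : R) :
  u @ \oo --> l -> t%:E < l -> \forall n \near \oo, t%:E < u n.
Proof.
case: l => [r| |] // cu tl.
- have /fine_cvgP[hfin hc] := cu.
  rewrite lte_fin in tl.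
  move/cvgrPdist_lt : hc => /(_ (r - t)%R); rewrite subr_gt0 => /(_ tl) h.
  apply: filterS2 hfin h => n nfin.
  rewrite -(fineK nfin) lte_fin ltr_norml /= => /andP[h1 h2]; lra.
- by move/cvgeyPgt : cu; apply.
Qed.

Section E.
Context {R : realType} {Xi : pointedType} {dXi : Xi -> Xi -> R}.
Hypothesis hd : is_metric dXi.
Local Notation T := (borel_type dXi).
Variables (P : probability T R) (Pn : nat -> probability T R).
Hypothesis hweak : weak_conv Pn P.

Lemma int_fin (mu : probability T R) (h : Xi -> R) (a b : R) :
  measurable_fun [set: T] (h : T -> R) -> (forall x, (a <= h x <= b)%R) ->
  \int[mu]_(x in [set: T]) (h x)%:E \is a fin_num.
Proof. by move=> mh hb; apply: integrable_fin_num => //; exact: int_bounded. Qed.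

Lemma L1 (us : nat -> Xi -> R) (u : Xi -> R) (b : R) :
  (forall n, measurable_fun [set: T] (us n : T -> R)) ->
  measurable_fun [set: T] (u : T -> R) ->
  (forall n x, (0 <= us n x <= b)%R) -> (forall x, (0 <= u x <= b)%R) ->
  (\forall x \ae P, forall r : R, (r < u x)%R -> exists del N, (0 < del)%R /\
      forall n z, (N <= n)%N -> (dXi z x < del)%R -> (r < us n z)%R) ->
  forall eta : R, (0 < eta)%R -> \forall n \near \oo,
    \int[P]_(x in [set: T]) (u x)%:E - eta%:E <= \int[Pn n]_(x in [set: T]) (us n x)%:E.
Proof.
move=> mus mu_ usb ub hae eta eta0.
have psb m x := psi_bnd hd usb m x.
have mps m : measurable_fun [set: T] (@psi _ _ dXi us m : T -> R).
  exact: (@dcont_meas _ _ _ (@psi _ _ dXi us m) (psi_dcont hd usb m)).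
pose g m x := (@psi _ _ dXi us m x)%:E.
have mg m : measurable_fun [set: T] (g m) by apply/measurable_EFinP.
have g0 m x : [set: T] x -> 0 <= g m x.
  by move=> _; rewrite lee_fin; have /andP[] := psb m x.
have gnd x : [set: T] x -> nondecreasing_seq (g ^~ x).
  by move=> _ m n mn; rewrite lee_fin; apply: psi_nd.
have mct := @monotone_convergence _ _ _ P setT measurableT g mg g0 gnd.
have IPnd : nondecreasing_seq (fun m => \int[P]_(x in [set: T]) g m x).
  move=> m n mn; apply: ge0_le_integral => //.
  - by move=> x; exact: g0.
  - by move=> x _; exact: (gnd x I m n mn).
rewrite (cvg_lim _ (ereal_nondecreasing_cvgn IPnd)) // in mct.
pose Psi x := limn (g ^~ x).
have PsiE x : Psi x = ereal_sup (range (g ^~ x)).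
  by rewrite /Psi (cvg_lim _ (ereal_nondecreasing_cvgn (gnd x I))).
have mPsi : measurable_fun [set: T] Psi.
  apply: (emeasurable_fun_cvg _ _ mg) => x _.
  exact: ereal_nondecreasing_is_cvgn (gnd x I).
have Psi0 x : [set: T] x -> 0 <= Psi x.
  move=> _; rewrite PsiE; apply: (le_trans (g0 0%N x I)).
  by apply: ereal_sup_ubound; exists 0%N.
have mue : measurable_fun [set: T] (fun x : T => (u x)%:E) by apply/measurable_EFinP.
have aePsi : {ae P, forall x : T, [set: T] x -> (u x)%:E <= Psi x}.
  have FP : Filter (nbhs (almost_everywhere P)) := ae_filter_ringOfSetsType P.
  apply: filterS hae => x hx _.
  apply: le_by_reals => t; rewrite lte_fin => tu.
  have [del [N [del0 HN]]] := hx t tu.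
  have [m hm] := psi_big hd usb del0 HN.
  rewrite PsiE; apply: (@le_trans _ _ (g m x)); first by rewrite lee_fin.
  by apply: ereal_sup_ubound; exists m.
have u0 : forall x : T, [set: T] x -> 0 <= (u x)%:E.
  by move=> x _; rewrite lee_fin; have /andP[] := ub x.
have intle := ae_ge0_le_integral measurableT u0 mue Psi0 mPsi aePsi.
rewrite /Psi mct in intle.
have Ufin : \int[P]_(x in [set: T]) (u x)%:E \is a fin_num := int_fin P mu_ ub.
have : ((fine (\int[P]_(x in [set: T]) (u x)%:E)) - eta)%:E <
    ereal_sup [set \int[P]_(x in [set: T]) g i x | i in [set: nat]].
  apply: (lt_le_trans _ intle); rewrite -[X in _ < X](fineK Ufin) lte_fin; lra.
move=> /ereal_sup_gtP [_ [m _ <-] hm].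
have bnd : exists M : R, forall x, (`|@psi _ _ dXi us m x| <= M)%R.
  by exists b => x; rewrite ger0_norm; case/andP: (psb m x).
have hw := hweak (psi_dcont hd usb m) bnd.
have ev := cvg_lower hw hm.
have Hm : \forall n \near \oo, (m <= n)%N by exists m.
apply: filterS2 Hm ev => n mn hn.
rewrite -[X in X - _](fineK Ufin) -EFinB; apply: (le_trans (ltW hn)).
apply: ge0_le_integral => //.
- by move=> x _; rewrite lee_fin; case/andP: (psb m x).
- exact/measurable_EFinP.
- exact/measurable_EFinP.
- by move=> x _; rewrite lee_fin; apply: psi_le_us.
Qed.
End E.

Section E2.
Context {R : realType} {Xi : pointedType} {dXi : Xi -> Xi -> R}.
Hypothesis hd : is_metric dXi.
Local Notation T := (borel_type dXi).
Variables (P : probability T R) (Pn : nat -> probability T R).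
Hypothesis hweak : weak_conv Pn P.

Lemma L1ab (us : nat -> Xi -> R) (u : Xi -> R) (a b : R) :
  (forall n, measurable_fun [set: T] (us n : T -> R)) ->
  measurable_fun [set: T] (u : T -> R) ->
  (forall n x, (a <= us n x <= b)%R) -> (forall x, (a <= u x <= b)%R) ->
  (\forall x \ae P, forall r : R, (r < u x)%R -> exists del N, (0 < del)%R /\
      forall n z, (N <= n)%N -> (dXi z x < del)%R -> (r < us n z)%R) ->
  forall eta : R, (0 < eta)%R -> \forall n \near \oo,
    \int[P]_(x in [set: T]) (u x)%:E - eta%:E <= \int[Pn n]_(x in [set: T]) (us n x)%:E.
Proof.
move=> mus mu_ usb ub hae eta eta0.
have FP : Filter (nbhs (almost_everywhere P)) := ae_filter_ringOfSetsType P.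
have := @L1 _ _ _ hd P Pn hweak (fun n x => us n x - a)%R (fun x => u x - a)%R (b - a)%R.
move=> /(_ _ _ _ _ _ eta eta0).
have mus' n : measurable_fun [set: T] ((fun x => us n x - a)%R : T -> R).
  by apply: measurable_funB.
have mu' : measurable_fun [set: T] ((fun x => u x - a)%R : T -> R).
  by apply: measurable_funB.
move=> /(_ mus' mu').
have usb' n x : (0 <= us n x - a <= b - a)%R.
  by have /andP[h1 h2] := usb n x; apply/andP; split; lra.
have ub' x : (0 <= u x - a <= b - a)%R.
  by have /andP[h1 h2] := ub x; apply/andP; split; lra.
move=> /(_ usb' ub').
have hae' : \forall x \ae P, forall r : R, (r < u x - a)%R -> exists del N, (0 < del)%R /\
      forall n z, (N <= n)%N -> (dXi z x < del)%R -> (r < us n z - a)%R.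
  apply: filterS hae => x hx r hr.
  have [del [N [del0 HN]]] := hx (r + a)%R ltac:(lra).
  exists del, N; split => // n z Nn dz; have := HN n z Nn dz; lra.
move=> /(_ hae'); apply: filterS => n.
rewrite (int_subc P a mu_ ub) (int_subc (Pn n) a (mus n) (usb n)).
have f1 := int_fin P mu_ ub; have f2 := int_fin (Pn n) (mus n) (usb n).
rewrite -(fineK f1) -(fineK f2) -!EFinB !lee_fin; lra.
Qed.

Lemma L1dual (us : nat -> Xi -> R) (u : Xi -> R) (a b : R) :
  (forall n, measurable_fun [set: T] (us n : T -> R)) ->
  measurable_fun [set: T] (u : T -> R) ->
  (forall n x, (a <= us n x <= b)%R) -> (forall x, (a <= u x <= b)%R) ->
  (\forall x \ae P, forall r : R, (u x < r)%R -> exists del N, (0 < del)%R /\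
      forall n z, (N <= n)%N -> (dXi z x < del)%R -> (us n z < r)%R) ->
  forall eta : R, (0 < eta)%R -> \forall n \near \oo,
    \int[Pn n]_(x in [set: T]) (us n x)%:E <= \int[P]_(x in [set: T]) (u x)%:E + eta%:E.
Proof.
move=> mus mu_ usb ub hae eta eta0.
have FP : Filter (nbhs (almost_everywhere P)) := ae_filter_ringOfSetsType P.
have := @L1 _ _ _ hd P Pn hweak (fun n x => b - us n x)%R (fun x => b - u x)%R (b - a)%R.
move=> /(_ _ _ _ _ _ eta eta0).
have mus' n : measurable_fun [set: T] ((fun x => b - us n x)%R : T -> R).
  by apply: measurable_funB.
have mu' : measurable_fun [set: T] ((fun x => b - u x)%R : T -> R).
  by apply: measurable_funB.
move=> /(_ mus' mu').
have usb' n x : (0 <= b - us n x <= b - a)%R.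
  by have /andP[h1 h2] := usb n x; apply/andP; split; lra.
have ub' x : (0 <= b - u x <= b - a)%R.
  by have /andP[h1 h2] := ub x; apply/andP; split; lra.
move=> /(_ usb' ub').
have hae' : \forall x \ae P, forall r : R, (r < b - u x)%R -> exists del N, (0 < del)%R /\
      forall n z, (N <= n)%N -> (dXi z x < del)%R -> (r < b - us n z)%R.
  apply: filterS hae => x hx r hr.
  have [del [N [del0 HN]]] := hx (b - r)%R ltac:(lra).
  exists del, N; split => // n z Nn dz; have := HN n z Nn dz; lra.
move=> /(_ hae'); apply: filterS => n.
rewrite (int_csub P b mu_ ub) (int_csub (Pn n) b (mus n) (usb n)).
have f1 := int_fin P mu_ ub; have f2 := int_fin (Pn n) (mus n) (usb n).
rewrite -(fineK f1) -(fineK f2) -!EFinB -EFinD !lee_fin; lra.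
Qed.

End E2.

Section F0.
Context {R : realType}.

Lemma esup_lt (u : (\bar R)^nat) (c : \bar R) :
  limn_esup u < c -> \forall n \near \oo, u n < c.
Proof.
rewrite limn_esup_lim.
rewrite (cvg_lim _ (ereal_nonincreasing_cvgn (nonincreasing_esups u))) //.
move=> /ereal_inf_ltP [_ [N _ <-] hN].
exists N => // n /= Nn; apply: le_lt_trans hN.
by apply: ereal_sup_ubound; exists n.
Qed.

Lemma cl1 (a b r : R) v : (a <= b)%R -> (a <= r)%R -> (r < clampR a b v)%R ->
  (r < b)%R /\ r%:E < v.
Proof.
move=> ab ar; case: v => [s| |] /=.
- rewrite lte_fin; case: (leP s a) => h1; case: (leP b s) => h2 h; split; lra.
- by move=> h; split => //; exact: ltry.
- by move=> h; exfalso; lra.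
Qed.

Lemma cl2 (a b r : R) v : (a <= b)%R -> (r < b)%R -> r%:E < v -> (r < clampR a b v)%R.
Proof.
move=> ab rb; case: v => [s| |] //=.
rewrite lte_fin; case: (leP s a) => h1; case: (leP b s) => h2 h; lra.
Qed.

Lemma cl3 (a b r : R) v : (a <= b)%R -> (r <= b)%R -> (clampR a b v < r)%R ->
  (a < r)%R /\ v < r%:E.
Proof.
move=> ab rb; case: v => [s| |] /=.
- rewrite lte_fin; case: (leP s a) => h1; case: (leP b s) => h2 h; split; lra.
- by move=> h; exfalso; lra.
- by move=> h; split => //; exact: ltNyr.
Qed.

Lemma cl4 (a b r : R) v : (a <= b)%R -> (a < r)%R -> v < r%:E -> (clampR a b v < r)%R.
Proof.
move=> ab ar; case: v => [s| |] //=.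
rewrite lte_fin; case: (leP s a) => h1; case: (leP b s) => h2 h; lra.
Qed.

End F0.

Section G.
Context {R : realType} {X : Type} {Xi : pointedType} (dX : X -> X -> R) (dXi : Xi -> Xi -> R).
Hypothesis hdX : is_metric dX.
Hypothesis hdXi : is_metric dXi.
Local Notation T := (borel_type dXi).
Variables (P : probability T R) (Pn : nat -> probability T R).
Hypothesis hweak : weak_conv Pn P.
Variables (f : Xi -> X -> \bar R) (fn : nat -> Xi -> X -> \bar R).
Hypothesis ha : forall x : X,
      measurable_fun [set: borel_type dXi] (fun xi : borel_type dXi => f xi x) /\
      (forall n, measurable_fun [set: borel_type dXi] (fun xi : borel_type dXi => fn n xi x)).
Hypothesis hb : forall x : X,
      liminf_K (fun K => liminf_ny dX
        (fun n y => Eexp (Pn n) (fun xi => trunc_le (fn n xi y) K)) x) = 0.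
Hypothesis hc : forall x : X,
      \forall xi \ae P, (f xi x <= liminf_nyz dX dXi fn x xi)%E.

Lemma dconv_ev xs x (del : R) : dconv dX xs x -> (0 < del)%R ->
  \forall n \near \oo, (dX (xs n) x < del)%R.
Proof.
move=> h d0; move/cvgrPdist_lt : h => /(_ del d0); apply: filterS => n.
by rewrite sub0r normrN ger0_norm //; case: hdX.
Qed.

Lemma LB x xs : dconv dX xs x -> forall t : R, t%:E < Eexp P (fun xi => f xi x) ->
  \forall n \near \oo, t%:E <= Eexp (Pn n) (fun xi => fn n xi (xs n)).
Proof.
move=> hxs t tE.
have [t' /andP[tt' t'E]] := ereal_dense tE.
rewrite lte_fin in tt'.
pose eps := ((t' - t) / 2)%R.
have eps0 : (0 < eps)%R by rewrite /eps; lra.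
have [K [K0 [del [N [del0 HN]]]]] : exists K : R, (0 <= K)%R /\ exists del N,
    (0 < del)%R /\ forall n y, (N <= n)%N -> (dX y x < del)%R ->
    (- eps)%:E < Eexp (Pn n) (fun xi => trunc_le (fn n xi y) K).
  have h := hb x; rewrite /liminf_K in h.
  have : (- eps)%:E < 0 by rewrite lte_fin; lra.
  rewrite -h => /ereal_sup_gtP [_ [K1 _ <-]] hK1.
  pose K := Num.max K1 0%R.
  exists K; split; first by rewrite le_max lexx orbT.
  have : (- eps)%:E < liminf_ny dX
      (fun n y => Eexp (Pn n) (fun xi => trunc_le (fn n xi y) K)) x.
    apply: (lt_le_trans hK1); apply: ereal_inf_lbound; exists K => //=.
    by rewrite le_max lexx.
  rewrite /liminf_ny => /ereal_sup_gtP [_ [de [N [de0 ->]]] hd].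
  exists de, N; split => // n y Nn dy.
  apply: (lt_le_trans hd); apply: ereal_inf_lbound; exists n, y; split => //.
have mg : measurable_fun [set: T] (fun xi : T => f xi x) := (ha x).1.
have mgs n : measurable_fun [set: T] (fun xi : T => fn n xi (xs n)) := (ha (xs n)).2 n.
have [M [M0 HM]] := E2 (mu:=P) K0 mg t'E.
have KM : (- K <= M)%R by lra.
have FP : Filter (nbhs (almost_everywhere P)) := ae_filter_ringOfSetsType P.
have hae : \forall xi \ae P, forall r : R, (r < clampR (- K) M (f xi x))%R ->
    exists del N, (0 < del)%R /\ forall n z, (N <= n)%N -> (dXi z xi < del)%R ->
    (r < clampR (- K) M (fn n z (xs n)))%R.
  apply: filterS (hc x) => xi hxi r hr.
  have [rK|Kr] := ltP r (- K)%R.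
    exists 1%R, 0%N; split => // n z _ _.
    by have /andP[h _] := clampR_bnd (fn n z (xs n)) KM; lra.
  have [rM rf] := cl1 KM Kr hr.
  have : r%:E < liminf_nyz dX dXi fn x xi := lt_le_trans rf hxi.
  rewrite /liminf_nyz => /ereal_sup_gtP [_ [de [N1 [de0 ->]]] hr'].
  have [N2 _ HN2] := dconv_ev hxs de0.
  exists de, (maxn N1 N2); split => // n z Nn dz.
  apply: cl2 => //; apply: (lt_le_trans hr'); apply: ereal_inf_lbound.
  exists n, (xs n), z; split => //.
  - by apply: leq_trans Nn; exact: leq_maxl.
  - by apply: HN2; apply: leq_trans Nn; exact: leq_maxr.
have ev := L1ab hdXi hweak (fun n => measurable_clampR KM (mgs n))
  (measurable_clampR KM mg) (fun n xi => clampR_bnd _ KM) (fun xi => clampR_bnd _ KM) hae eps0.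
have evN : \forall n \near \oo, (N <= n)%N by exists N.
have evd := dconv_ev hxs del0.
apply: filterS3 evN evd ev => n Nn dn hn.
have h1 := E1 (Pn n) K0 M0 (mgs n).
have h2 := HN n (xs n) Nn dn.
apply: le_trans h1.
have f1 := int_fin P (measurable_clampR KM mg) (fun xi => clampR_bnd (f xi x) KM).
have f2 := int_fin (Pn n) (measurable_clampR KM (mgs n)) (fun xi => clampR_bnd (fn n xi (xs n)) KM).
have h3 : (t + eps)%:E <= \int[Pn n]_(x0 in [set: T]) (clampR (- K) M (fn n x0 (xs n)))%:E.
  move: hn HM; rewrite -(fineK f1) -(fineK f2) -EFinB !lee_fin lte_fin /eps; lra.
have := leeD h3 (ltW h2); rewrite -EFinD.
by rewrite (_ : (t + eps + - eps)%R = t) //; lra.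
Qed.

End G.

Section G2.
Context {R : realType} {X : Type} {Xi : pointedType} (dX : X -> X -> R) (dXi : Xi -> Xi -> R).
Hypothesis hdX : is_metric dX.
Hypothesis hdXi : is_metric dXi.
Local Notation T := (borel_type dXi).
Variables (P : probability T R) (Pn : nat -> probability T R).
Hypothesis hweak : weak_conv Pn P.
Variables (f : Xi -> X -> \bar R) (fn : nat -> Xi -> X -> \bar R).
Hypothesis ha : forall x : X,
      measurable_fun [set: borel_type dXi] (fun xi : borel_type dXi => f xi x) /\
      (forall n, measurable_fun [set: borel_type dXi] (fun xi : borel_type dXi => fn n xi x)).

Lemma UB x xs : dconv dX xs x ->
  limsup_K (fun K => limn_esup
          (fun n => Eexp (Pn n) (fun xi => trunc_ge (fn n xi (xs n)) K))) = 0 ->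
  (\forall xi \ae P, (limsup_nz dXi (fun n z => fn n z (xs n)) xi <= f xi x)%E) ->
  forall t : R, Eexp P (fun xi => f xi x) < t%:E ->
  \forall n \near \oo, Eexp (Pn n) (fun xi => fn n xi (xs n)) <= t%:E.
Proof.
move=> hxs hi hii t Et.
have [t' /andP[Et' t't]] := ereal_dense Et.
rewrite lte_fin in t't.
pose eps := ((t - t') / 2)%R.
have eps0 : (0 < eps)%R by rewrite /eps; lra.
have [K [K0 evK]] : exists K : R, (0 <= K)%R /\ \forall n \near \oo,
    Eexp (Pn n) (fun xi => trunc_ge (fn n xi (xs n)) K) < eps%:E.
  have : 0 < eps%:E by rewrite lte_fin.
  rewrite -hi /limsup_K => /ereal_inf_ltP [_ [K1 _ <-]] hK1.
  pose K := Num.max K1 0%R.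
  exists K; split; first by rewrite le_max lexx orbT.
  apply: esup_lt; apply: le_lt_trans hK1; apply: ereal_sup_ubound.
  by exists K => //=; rewrite le_max lexx.
have mg : measurable_fun [set: T] (fun xi : T => f xi x) := (ha x).1.
have mgs n : measurable_fun [set: T] (fun xi : T => fn n xi (xs n)) := (ha (xs n)).2 n.
have [M [M0 HM]] := E2' (mu:=P) K0 mg Et'.
have MK : (- M <= K)%R by lra.
have FP : Filter (nbhs (almost_everywhere P)) := ae_filter_ringOfSetsType P.
have hae : \forall xi \ae P, forall r : R, (clampR (- M) K (f xi x) < r)%R ->
    exists del N, (0 < del)%R /\ forall n z, (N <= n)%N -> (dXi z xi < del)%R ->
    (clampR (- M) K (fn n z (xs n)) < r)%R.
  apply: filterS hii => xi hxi r hr.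
  have [Kr|rK] := ltP K r.
    exists 1%R, 0%N; split => // n z _ _.
    by have /andP[_ h] := clampR_bnd (fn n z (xs n)) MK; lra.
  have [Mr fr] := cl3 MK rK hr.
  have : limsup_nz dXi (fun n z => fn n z (xs n)) xi < r%:E := le_lt_trans hxi fr.
  rewrite /limsup_nz => /ereal_inf_ltP [_ [de [N1 [de0 ->]]] hr'].
  exists de, N1; split => // n z Nn dz.
  apply: cl4 => //; apply: le_lt_trans hr'; apply: ereal_sup_ubound.
  by exists n, z; split.
have ev := L1dual hdXi hweak (fun n => measurable_clampR MK (mgs n))
  (measurable_clampR MK mg) (fun n xi => clampR_bnd _ MK) (fun xi => clampR_bnd _ MK) hae eps0.
apply: filterS2 evK ev => n hK hn.
have h1 := E1' (Pn n) K0 M0 (mgs n).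
apply: le_trans h1 _.
have f1 := int_fin P (measurable_clampR MK mg) (fun xi => clampR_bnd (f xi x) MK).
have f2 := int_fin (Pn n) (measurable_clampR MK (mgs n)) (fun xi => clampR_bnd (fn n xi (xs n)) MK).
have h3 : \int[Pn n]_(x0 in [set: T]) (clampR (- M) K (fn n x0 (xs n)))%:E <= (t' + eps)%:E.
  move: hn HM; rewrite -(fineK f1) -(fineK f2) -EFinD !lee_fin lte_fin /eps; lra.
have := leeD h3 (ltW hK); rewrite -EFinD.
by rewrite (_ : (t' + eps + eps)%R = t) //; rewrite /eps; lra.
Qed.

End G2.

Unset Implicit Arguments.

Theorem theorem3p7 (R : realType) (X : Type) (Xi : pointedType)
  (dX : X -> X -> R) (dXi : Xi -> Xi -> R)
  (hdX : is_metric dX) (hdXi : is_metric dXi)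
  (P : probability (borel_type dXi) R)
  (Pn : nat -> probability (borel_type dXi) R)
  (hweak : weak_conv Pn P)
  (f : Xi -> X -> \bar R) (fn : nat -> Xi -> X -> \bar R)
  (ha : forall x : X,
      measurable_fun [set: borel_type dXi] (fun xi : borel_type dXi => f xi x) /\
      (forall n, measurable_fun [set: borel_type dXi] (fun xi : borel_type dXi => fn n xi x)))
  (hb : forall x : X,
      liminf_K (fun K => liminf_ny dX
        (fun n y => Eexp (Pn n) (fun xi => trunc_le (fn n xi y) K)) x) = 0)
  (hc : forall x : X,
      \forall xi \ae P, (f xi x <= liminf_nyz dX dXi fn x xi)%E)
  (hrec : forall x : X,
      Eexp P (fun xi => f xi x) = +oo \/
      exists xs : nat -> X, [/\ dconv dX xs x,
        limsup_K (fun K => limn_esup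
          (fun n => Eexp (Pn n) (fun xi => trunc_ge (fn n xi (xs n)) K))) = 0 &
        \forall xi \ae P,
          (limsup_nz dXi (fun n z => fn n z (xs n)) xi <= f xi x)%E]) :
  epi_converges dX (fun n x => Eexp (Pn n) (fun xi => fn n xi x))
    (fun x => Eexp P (fun xi => f xi x)).
Proof.
move=> x; split.
  move=> xs hxs; apply: liminf_ge => t ht.
  exact: (LB hdX hdXi hweak ha hb hc hxs ht).
case: (hrec x) => [Einf|[xs [hxs hi hii]]].
  have hc0 : dconv dX (fun=> x) x.
    rewrite /dconv (_ : dX x x = 0%R); first exact: cvg_cst.
    by case: hdX => _ h _ _; apply/h.
  exists (fun=> x) => //; apply: cvg_by_bounds => t ht.
    exact: (LB hdX hdXi hweak ha hb hc hc0 ht).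
  by move: ht; rewrite Einf ltNge leey.
exists xs => //; apply: cvg_by_bounds => t ht.
  exact: (LB hdX hdXi hweak ha hb hc hxs ht).
exact: (UB hdXi hweak ha hxs hi hii ht).
Qed.
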